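(* Let $P^1(z) = \tfrac12 z(1+z)$, $P^2(z) = z(1+z)$, and let $U^2$ be an attracting petal of $P^2$ at its parabolic fixed point $0$ as described in the context. Let $V$ be an open subset of $\mathrm D(0,\tfrac13)$ and let $\varepsilon > 0$. Then there exists $m_0$ such that for every $m \ge m_0$ and every $z_0 \in (P^1)^{\circ m}(V)$, \[ \mathrm m\Big(V \cap (P^1)^{\circ -m}\big((\mathbb C \setminus U^2) + z_0\big)\Big) < \varepsilon. \]
   Context: $\mathrm m$ is two-dimensional Lebesgue measure, $\mathrm D(a,r)$ is the open disc of centre $a$ and radius $r$, $(P^1)^{\circ m}$ is the $m$-fold iterate and $(P^1)^{\circ -m}(X)$ denotes the full preimage of $X$ under it. For $X \subset \mathbb C$ and $z_0 \in \mathbb C$, $X + z_0 = \{z \in \mathbb C : z - z_0 \in X\}$. The polynomial $P^2$ has a parabolic fixed point at $0$ with multiplier $1$, with attracting direction the negative real axis and repelling direction the positive real axis. $U^2$ is an open attracting petal for $P^2$ at $0$: an open set with $0 \in \partial U^2$, $P^2(U^2) \subset U^2$, on which $P^2$ is conformally conjugate to $z \mapsto z+1$, and such that $\mathbb C \setminus U^2$ has a cusp at $0$ in the direction of the positive real axis, i.e. for every $\theta > 0$ there is $r > 0$ with $\mathrm D(0,r) \setminus U^2 \subset \{0\} \cup \{z \ne 0 : |\arg z| < \theta\}$. *)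

(* Defs.v *)
From Stdlib Require Import Reals.
Open Scope R_scope.

Definition Cx := (R * R)%type.
Definition Cadd (z w : Cx) : Cx := (fst z + fst w, snd z + snd w).
Definition Csub (z w : Cx) : Cx := (fst z - fst w, snd z - snd w).
Definition Cmul (z w : Cx) : Cx :=
  (fst z * fst w - snd z * snd w, fst z * snd w + snd z * fst w).
Definition Cnorm (z : Cx) : R := sqrt (fst z * fst z + snd z * snd z).
Definition Czero : Cx := (0, 0).
Definition Cone : Cx := (1, 0).

Definition P2 (z : Cx) : Cx := Cmul z (Cadd Cone z).
Definition P1 (z : Cx) : Cx := Cmul (/2, 0) (P2 z).

Definition Cdisc (a : Cx) (r : R) (z : Cx) : Prop := Cnorm (Csub z a) < r.

Definition Cis_open (U : Cx -> Prop) : Prop :=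
  forall z, U z -> exists r, 0 < r /\ forall w, Cdisc z r w -> U w.

Definition Cin_closure (U : Cx -> Prop) (a : Cx) : Prop :=
  forall r, 0 < r -> exists w, U w /\ Cdisc a r w.

Definition C_differentiable_at (U : Cx -> Prop) (f : Cx -> Cx) (z : Cx) : Prop :=
  exists L : Cx, forall eps, 0 < eps -> exists delta, 0 < delta /\
    forall h, 0 < Cnorm h < delta -> U (Cadd z h) ->
      Cnorm (Csub (Csub (f (Cadd z h)) (f z)) (Cmul L h)) <= eps * Cnorm h.

Definition abs_arg_lt (z : Cx) (theta : R) : Prop :=
  exists t, -PI < t <= PI /\ Rabs t < theta /\
    fst z = Cnorm z * cos t /\ snd z = Cnorm z * sin t.

Definition attracting_petal_P2 (U : Cx -> Prop) : Prop :=
  Cis_open U /\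
  ~ U Czero /\ Cin_closure U Czero /\
  (forall z, U z -> U (P2 z)) /\
  (exists phi : Cx -> Cx,
      (forall z, U z -> C_differentiable_at U phi z) /\
      (forall z w, U z -> U w -> phi z = phi w -> z = w) /\
      (forall z, U z -> phi (P2 z) = Cadd (phi z) Cone)) /\
  (forall theta, 0 < theta -> exists r, 0 < r /\
      forall z, Cdisc Czero r z -> ~ U z -> z = Czero \/ (z <> Czero /\ abs_arg_lt z theta)).

(* Two-dimensional Lebesgue (outer) measure of A is < eps: A is covered by
   countably many rectangles [a,b) x [c,d) whose total area is < eps. *)
Definition m2_lt (A : Cx -> Prop) (eps : R) : Prop :=
  exists (a b c d : nat -> R) (s : R),
    (forall n, a n <= b n /\ c n <= d n) /\
    (forall z, A z -> exists n, a n <= fst z < b n /\ c n <= snd z < d n) /\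
    infinite_sum (fun n => (b n - a n) * (d n - c n)) s /\ s < eps.

(* Main.v *)
Require Import Defs.
From Stdlib Require Import Reals Lra Lia Psatz ClassicalEpsilon Arith.
From Coquelicot Require Complex.
Open Scope R_scope.

Lemma Cnorm_Cmod z : Cnorm z = Complex.Cmod z.
Proof. unfold Cnorm, Complex.Cmod. f_equal. simpl. ring. Qed.

Lemma cn_ge0 z : 0 <= Cnorm z.
Proof. unfold Cnorm; apply sqrt_pos. Qed.

Lemma cn_mul a b : Cnorm (Cmul a b) = Cnorm a * Cnorm b.
Proof. rewrite !Cnorm_Cmod. apply (Complex.Cmod_mult a b). Qed.

Lemma cn_add a b : Cnorm (Cadd a b) <= Cnorm a + Cnorm b.
Proof. rewrite !Cnorm_Cmod. apply (Complex.Cmod_triangle a b). Qed.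

Lemma cn_opp a : Cnorm (-fst a, - snd a) = Cnorm a.
Proof. unfold Cnorm; simpl; f_equal; ring. Qed.

Lemma cn_sub a b : Cnorm (Csub a b) <= Cnorm a + Cnorm b.
Proof.
  replace (Csub a b) with (Cadd a (-fst b, -snd b)).
  - rewrite <- (cn_opp b). apply cn_add.
  - unfold Cadd, Csub; simpl; f_equal; ring.
Qed.

Lemma cn_sub_sym a b : Cnorm (Csub a b) = Cnorm (Csub b a).
Proof. unfold Cnorm, Csub; simpl; f_equal; ring. Qed.

Lemma cn_sub_tri a b c : Cnorm (Csub a c) <= Cnorm (Csub a b) + Cnorm (Csub b c).
Proof.
  replace (Csub a c) with (Cadd (Csub a b) (Csub b c)) by (unfold Cadd, Csub; simpl; f_equal; ring).
  apply cn_add.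
Qed.

Lemma cn_sq a : Cnorm a * Cnorm a = fst a * fst a + snd a * snd a.
Proof. unfold Cnorm. apply sqrt_sqrt. nra. Qed.

Lemma cn_fst a : Rabs (fst a) <= Cnorm a.
Proof.
  unfold Cnorm. rewrite <- sqrt_Rsqr_abs. apply sqrt_le_1_alt. unfold Rsqr. nra.
Qed.

Lemma cn_snd a : Rabs (snd a) <= Cnorm a.
Proof.
  unfold Cnorm. rewrite <- sqrt_Rsqr_abs. apply sqrt_le_1_alt. unfold Rsqr. nra.
Qed.

Lemma cn_le_sum a : Cnorm a <= Rabs (fst a) + Rabs (snd a).
Proof.
  pose proof (cn_ge0 a). pose proof (cn_sq a).
  pose proof (Rabs_pos (fst a)). pose proof (Rabs_pos (snd a)).
  assert (Cnorm a * Cnorm a <= (Rabs (fst a) + Rabs (snd a)) * (Rabs (fst a) + Rabs (snd a))).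
  { rewrite H0.
    replace (fst a * fst a) with (Rabs (fst a) * Rabs (fst a)) by (rewrite <- Rabs_mult; apply Rabs_pos_eq; nra).
    replace (snd a * snd a) with (Rabs (snd a) * Rabs (snd a)) by (rewrite <- Rabs_mult; apply Rabs_pos_eq; nra).
    nra. }
  nra.
Qed.

Lemma cn_pair0 x : Cnorm (x, 0) = Rabs x.
Proof. unfold Cnorm; simpl. rewrite <- sqrt_Rsqr_abs. unfold Rsqr. f_equal. ring. Qed.
Lemma cn_0pair x : Cnorm (0, x) = Rabs x.
Proof. unfold Cnorm; simpl. rewrite <- sqrt_Rsqr_abs. unfold Rsqr. f_equal. ring. Qed.
Lemma cn_zero : Cnorm Czero = 0.
Proof. unfold Czero. rewrite cn_pair0. apply Rabs_R0. Qed.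
Lemma cn_one : Cnorm Cone = 1.
Proof. unfold Cone. rewrite cn_pair0. apply Rabs_R1. Qed.


Definition F (k : nat) (z : Cx) : Cx := Nat.iter k P1 z.
Definition hfac (a b : Cx) : Cx := Cmul (/2, 0) (Cadd (Cadd Cone a) b).
Fixpoint D (k : nat) (z w : Cx) : Cx :=
  match k with O => Cone | S k => Cmul (D k z w) (hfac (F k z) (F k w)) end.

Lemma F_S k z : F (S k) z = P1 (F k z).
Proof. reflexivity. Qed.

Lemma P1_diff a b : Csub (P1 a) (P1 b) = Cmul (Csub a b) (hfac a b).
Proof.
  destruct a as [a1 a2], b as [b1 b2].
  unfold P1, P2, hfac, Csub, Cmul, Cadd, Cone; simpl; f_equal; field.
Qed.

Lemma Cmul_assoc a b c : Cmul (Cmul a b) c = Cmul a (Cmul b c).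
Proof. destruct a, b, c; unfold Cmul; simpl; f_equal; ring. Qed.

Lemma F_diff k z w : Csub (F k z) (F k w) = Cmul (Csub z w) (D k z w).
Proof.
  induction k; simpl D.
  - unfold F; simpl. destruct z, w; unfold Csub, Cmul, Cone; simpl; f_equal; ring.
  - rewrite !F_S, P1_diff, IHk. apply Cmul_assoc.
Qed.

Lemma P1_norm a : Cnorm a <= 2/5 -> Cnorm (P1 a) <= 7/10 * Cnorm a.
Proof.
  intros Ha.
  replace (P1 a) with (Cmul (/2, 0) (Cmul a (Cadd Cone a))).
  2:{ destruct a; unfold P1, P2, Cmul, Cadd, Cone; simpl; f_equal; ring. }
  rewrite !cn_mul, cn_pair0. pose proof (cn_add Cone a). rewrite cn_one in H.
  pose proof (cn_ge0 a). pose proof (cn_ge0 (Cadd Cone a)).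
  rewrite Rabs_pos_eq by lra. nra.
Qed.

Lemma pow_le1 x k : 0 <= x <= 1 -> 0 <= x ^ k <= 1.
Proof. intros H; induction k; simpl; nra. Qed.

Lemma F_norm k z : Cnorm z <= 2/5 -> Cnorm (F k z) <= (7/10)^k * Cnorm z.
Proof.
  intros Hz. pose proof (cn_ge0 z).
  induction k.
  - simpl. unfold F; simpl. lra.
  - rewrite F_S. simpl pow.
    assert (0 <= (7/10)^k <= 1) by (apply pow_le1; lra).
    assert (Cnorm (F k z) <= 2/5) by nra.
    pose proof (P1_norm _ H1). nra.
Qed.

Lemma F_norm' k z : Cnorm z <= 2/5 -> Cnorm (F k z) <= Cnorm z.
Proof.
  intros Hz. pose proof (F_norm k z Hz). pose proof (cn_ge0 z).
  assert (0 <= (7/10)^k <= 1) by (apply pow_le1; lra). nra.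
Qed.

Lemma hfac_bounds a b : Cnorm a <= 2/5 -> Cnorm b <= 2/5 ->
  1/10 <= Cnorm (hfac a b) <= 9/10.
Proof.
  intros Ha Hb. unfold hfac. rewrite cn_mul, cn_pair0, Rabs_pos_eq by lra.
  pose proof (cn_add (Cadd Cone a) b). pose proof (cn_add Cone a). rewrite cn_one in H0.
  assert (Cone = Csub (Csub (Cadd (Cadd Cone a) b) b) a) by
    (destruct a, b; unfold Cone, Csub, Cadd; simpl; f_equal; ring).
  pose proof (cn_sub (Csub (Cadd (Cadd Cone a) b) b) a).
  pose proof (cn_sub (Cadd (Cadd Cone a) b) b).
  rewrite <- H1, cn_one in H2. lra.
Qed.

Lemma D_bound k z w : Cnorm z <= 2/5 -> Cnorm w <= 2/5 ->
  (1/10)^k <= Cnorm (D k z w) <= (9/10)^k.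
Proof.
  intros Hz Hw. induction k; simpl D; simpl pow.
  - rewrite cn_one; lra.
  - rewrite cn_mul.
    pose proof (hfac_bounds (F k z) (F k w) (Rle_trans _ _ _ (F_norm' k z Hz) Hz)
      (Rle_trans _ _ _ (F_norm' k w Hw) Hw)).
    assert (0 <= (1/10)^k) by (apply pow_le; lra). nra.
Qed.


Lemma D_comp k z w p q : Cnorm z <= 2/5 -> Cnorm w <= 2/5 -> Cnorm p <= 2/5 -> Cnorm q <= 2/5 ->
  Cnorm (Csub (D k z w) (D k p q)) <=
  Cnorm (D k p q) * (exp (50 * (Cnorm (Csub z p) + Cnorm (Csub w q)) * (1 - (9/10)^k)) - 1).
Proof.
  intros Hz Hw Hp Hq.
  set (d := Cnorm (Csub z p) + Cnorm (Csub w q)).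
  assert (Hd : 0 <= d) by (unfold d; pose proof (cn_ge0 (Csub z p)); pose proof (cn_ge0 (Csub w q)); lra).
  induction k; simpl D.
  - simpl pow. replace (Csub Cone Cone) with Czero by (unfold Csub, Cone, Czero; simpl; f_equal; ring).
    rewrite cn_zero. replace (50 * d * (1 - 1)) with 0 by ring. rewrite exp_0. lra.
  - set (X := D k z w) in *. set (Y := D k p q) in *.
    set (x := hfac (F k z) (F k w)). set (y := hfac (F k p) (F k q)).
    set (Sk := 50 * d * (1 - (9/10)^k)) in *.
    set (e := 5 * (9/10)^k * d).
    assert (Hpk : 0 <= (9/10)^k <= 1) by (apply pow_le1; lra).
    assert (HS : 0 <= Sk) by (unfold Sk; nra).
    assert (HA : 1 <= exp Sk) by (pose proof (exp_ineq1_le Sk); lra).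
    assert (Hfz := Rle_trans _ _ _ (F_norm' k z Hz) Hz).
    assert (Hfw := Rle_trans _ _ _ (F_norm' k w Hw) Hw).
    assert (Hfp := Rle_trans _ _ _ (F_norm' k p Hp) Hp).
    assert (Hfq := Rle_trans _ _ _ (F_norm' k q Hq) Hq).
    assert (Hy := hfac_bounds _ _ Hfp Hfq). fold y in Hy.
    assert (Hxy : Cnorm (Csub x y) <= e * Cnorm y).
    { replace (Csub x y)
        with (Cmul (/2, 0) (Cadd (Cmul (Csub z p) (D k z p)) (Cmul (Csub w q) (D k w q)))).
      2:{ rewrite <- !F_diff. unfold x, y, hfac.
          destruct (F k z), (F k w), (F k p), (F k q); unfold Cmul, Cadd, Csub, Cone; simpl; f_equal; ring. }
      rewrite cn_mul, cn_pair0, Rabs_pos_eq by lra.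
      pose proof (cn_add (Cmul (Csub z p) (D k z p)) (Cmul (Csub w q) (D k w q))).
      rewrite !cn_mul in H.
      pose proof (D_bound k z p Hz Hp). pose proof (D_bound k w q Hw Hq).
      pose proof (cn_ge0 (Csub z p)). pose proof (cn_ge0 (Csub w q)).
      unfold e, d.
      assert (Cnorm (Csub z p) * Cnorm (D k z p) + Cnorm (Csub w q) * Cnorm (D k w q)
         <= (9/10)^k * (Cnorm (Csub z p) + Cnorm (Csub w q))) by nra.
      set (P := (9/10)^k * (Cnorm (Csub z p) + Cnorm (Csub w q))) in *.
      assert (0 <= P) by (unfold P; nra).
      assert (P / 2 <= 5 * P * Cnorm y) by nra.
      replace (5 * (9 / 10) ^ k * (Cnorm (Csub z p) + Cnorm (Csub w q)) * Cnorm y) with (5 * P * Cnorm y) by (unfold P; ring).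
      lra. }
    assert (He : 0 <= e) by (unfold e; nra).
    assert (Hx : Cnorm x <= Cnorm y * (1 + e)).
    { replace x with (Cadd y (Csub x y)) by (destruct x, y; unfold Cadd, Csub; simpl; f_equal; ring).
      pose proof (cn_add y (Csub x y)). lra. }
    replace (Csub (Cmul X x) (Cmul Y y)) with (Cadd (Cmul (Csub X Y) x) (Cmul Y (Csub x y)))
      by (destruct X, Y, x, y; unfold Cmul, Cadd, Csub; simpl; f_equal; ring).
    pose proof (cn_add (Cmul (Csub X Y) x) (Cmul Y (Csub x y))).
    rewrite !cn_mul in H |- *.
    pose proof (cn_ge0 Y). pose proof (cn_ge0 x). pose proof (cn_ge0 (Csub X Y)).
    pose proof (cn_ge0 (Csub x y)).
    assert (Cnorm (Csub X Y) * Cnorm x <= Cnorm Y * (exp Sk - 1) * (Cnorm y * (1 + e))).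
    { apply Rmult_le_compat; try lra. }
    assert (Cnorm Y * Cnorm (Csub x y) <= Cnorm Y * (e * Cnorm y)) by (apply Rmult_le_compat_l; lra).
    replace (50 * d * (1 - (9 / 10) ^ S k)) with (Sk + e) by (unfold Sk, e; rewrite <- tech_pow_Rmult; generalize ((9/10)^k); intro P0; field).
    rewrite exp_plus.
    pose proof (exp_ineq1_le e).
    assert (exp Sk * (1 + e) <= exp Sk * exp e) by (apply Rmult_le_compat_l; lra).
    assert (0 <= Cnorm Y * Cnorm y) by nra.
    assert (Cnorm Y * Cnorm y * (exp Sk * (1 + e)) <= Cnorm Y * Cnorm y * (exp Sk * exp e))
      by (apply Rmult_le_compat_l; lra).
    assert (Cnorm Y * (exp Sk - 1) * (Cnorm y * (1 + e)) + Cnorm Y * (e * Cnorm y)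
      = Cnorm Y * Cnorm y * (exp Sk * (1 + e)) - Cnorm Y * Cnorm y) by ring.
    rewrite cn_mul in H. assert (Cnorm Y * Cnorm y * (exp Sk * exp e - 1) = Cnorm Y * Cnorm y * (exp Sk * exp e) - Cnorm Y * Cnorm y) by ring. lra.
Qed.

Lemma D_comp' k z w p q : Cnorm z <= 2/5 -> Cnorm w <= 2/5 -> Cnorm p <= 2/5 -> Cnorm q <= 2/5 ->
  Cnorm (Csub (D k z w) (D k p q)) <=
  Cnorm (D k p q) * (exp (50 * (Cnorm (Csub z p) + Cnorm (Csub w q))) - 1).
Proof.
  intros. eapply Rle_trans. apply D_comp; auto.
  apply Rmult_le_compat_l. apply cn_ge0.
  assert (0 <= (9/10)^k <= 1) by (apply pow_le1; lra).
  pose proof (cn_ge0 (Csub z p)). pose proof (cn_ge0 (Csub w q)).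
  assert (exp (50 * (Cnorm (Csub z p) + Cnorm (Csub w q)) * (1 - (9 / 10) ^ k)) <=
    exp (50 * (Cnorm (Csub z p) + Cnorm (Csub w q)))).
  { destruct (Req_dec (50 * (Cnorm (Csub z p) + Cnorm (Csub w q)) * (1 - (9 / 10) ^ k))
       (50 * (Cnorm (Csub z p) + Cnorm (Csub w q)))) as [E|E]; [rewrite E; lra|].
    left; apply exp_increasing. nra. }
  lra.
Qed.

Lemma D_up k z w p q : Cnorm z <= 2/5 -> Cnorm w <= 2/5 -> Cnorm p <= 2/5 -> Cnorm q <= 2/5 ->
  Cnorm (D k z w) <= Cnorm (D k p q) * exp (50 * (Cnorm (Csub z p) + Cnorm (Csub w q))).
Proof.
  intros. pose proof (D_comp' k z w p q H H0 H1 H2).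
  replace (D k z w) with (Cadd (D k p q) (Csub (D k z w) (D k p q)))
    by (destruct (D k z w), (D k p q); unfold Cadd, Csub; simpl; f_equal; ring).
  pose proof (cn_add (D k p q) (Csub (D k z w) (D k p q))). lra.
Qed.


Definition dl : R := 1/1000.
Definition KK : R := exp 50.

Definition wv (m : nat) (v z : Cx) : Cx := Csub (F m z) (F m v).
Definition bad (m : nat) (v : Cx) (th : R) (z : Cx) : Prop :=
  Cnorm z < 1/3 /\ Rabs (snd (wv m v z)) <= th * Cnorm (wv m v z).

Lemma exp_small : exp (1/10) <= 5/4.
Proof.
  pose proof (exp_ineq1_le (-(1/10))).
  pose proof (exp_plus (1/10) (-(1/10))). replace (1/10 + - (1/10)) with 0 in H0 by ring.
  rewrite exp_0 in H0. pose proof (exp_pos (1/10)). nra.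
Qed.

Lemma near_c z c : Cnorm (Csub z c) <= dl -> Cnorm c <= 1/3 + dl -> Cnorm z <= 2/5.
Proof.
  intros. replace z with (Cadd c (Csub z c)) by (destruct z, c; unfold Cadd, Csub; simpl; f_equal; ring).
  pose proof (cn_add c (Csub z c)). unfold dl in *. lra.
Qed.

Lemma local_est m z1 z2 c : Cnorm (Csub z1 c) <= dl -> Cnorm (Csub z2 c) <= dl ->
  Cnorm c <= 1/3 + dl ->
  Cnorm (Csub (D m z1 z2) (D m c c)) <= Cnorm (D m c c) / 4.
Proof.
  intros H1 H2 Hc.
  assert (Hc' : Cnorm c <= 2/5) by (unfold dl in *; lra).
  pose proof (D_comp' m z1 z2 c c (near_c _ _ H1 Hc) (near_c _ _ H2 Hc) Hc' Hc').
  eapply Rle_trans; [apply H|].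
  assert (exp (50 * (Cnorm (Csub z1 c) + Cnorm (Csub z2 c))) <= exp (1/10)).
  { destruct (Req_dec (50 * (Cnorm (Csub z1 c) + Cnorm (Csub z2 c))) (1/10)) as [E|E];
      [rewrite E; lra|]. left; apply exp_increasing. unfold dl in *; lra. }
  pose proof exp_small. pose proof (cn_ge0 (D m c c)). nra.
Qed.

Lemma G_est m v th z c : 0 <= th -> Cnorm v < 1/3 -> bad m v th z ->
  Cnorm (Csub z c) <= dl -> Cnorm c <= 1/3 + dl ->
  Rabs (snd (wv m v z)) <= th * KK * Cnorm (D m c c).
Proof.
  intros Hth Hv [Hz Hb] H1 Hc.
  assert (Hc' : Cnorm c <= 2/5) by (unfold dl in *; lra).
  eapply Rle_trans; [apply Hb|].
  rewrite Rmult_assoc. apply Rmult_le_compat_l; auto.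
  unfold wv. rewrite F_diff, cn_mul.
  pose proof (D_up m z v c c (near_c _ _ H1 Hc) ltac:(lra) Hc' Hc').
  pose proof (cn_sub z v). pose proof (cn_ge0 (Csub z v)).
  pose proof (cn_ge0 (D m z v)). pose proof (cn_ge0 (D m c c)).
  pose proof (cn_sub v c).
  assert (exp (50 * (Cnorm (Csub z c) + Cnorm (Csub v c))) <= KK).
  { unfold KK. destruct (Req_dec (50 * (Cnorm (Csub z c) + Cnorm (Csub v c))) 50) as [E|E];
      [rewrite E; lra|]. left; apply exp_increasing. unfold dl in *; lra. }
  assert (Cnorm (D m z v) <= Cnorm (D m c c) * KK).
  { eapply Rle_trans; [apply H|]. apply Rmult_le_compat_l; auto. }
  assert (Cnorm (Csub z v) <= 1) by lra.
  assert (0 <= KK) by (unfold KK; left; apply exp_pos).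
  nra.
Qed.

Lemma Dpos m c : Cnorm c <= 2/5 -> 0 < Cnorm (D m c c).
Proof.
  intros. pose proof (D_bound m c c H H). pose proof (pow_lt (1/10) m ltac:(lra)). lra.
Qed.


Lemma box_near x y c : Rabs (x - fst c) <= dl/2 -> Rabs (y - snd c) <= dl/2 ->
  Cnorm (Csub (x, y) c) <= dl.
Proof.
  intros. eapply Rle_trans; [apply cn_le_sum|]. simpl. lra.
Qed.

Lemma core_arith s L th h A w1 w2 d23 :
  0 < L -> A >= Rabs s * L / 4 -> w1 <= th * KK * L -> w2 <= th * KK * L ->
  d23 <= 5/4 * h * L -> A <= d23 + w2 + w1 -> Rabs s <= 8 * th * KK + 5 * h.
Proof.
  intros. assert (Rabs s * L <= (8 * th * KK + 5 * h) * L) by nra.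
  apply Rmult_le_reg_r with L; auto.
Qed.

Lemma strip_V m v th c x1 y1 x2 y2 h : 0 <= th -> Cnorm v < 1/3 ->
  Cnorm c <= 1/3 + dl ->
  Rabs (fst (D m c c)) >= Cnorm (D m c c) / 2 ->
  bad m v th (x1, y1) -> bad m v th (x2, y2) ->
  Rabs (x1 - fst c) <= dl/2 -> Rabs (y1 - snd c) <= dl/2 ->
  Rabs (x2 - fst c) <= dl/2 -> Rabs (y2 - snd c) <= dl/2 ->
  Rabs (x1 - x2) <= h ->
  Rabs (y2 - y1) <= 8 * th * KK + 5 * h.
Proof.
  intros Hth Hv Hc Hre B1 B2 a1 b1 a2 b2 Hh.
  set (L := D m c c) in *.
  assert (HL : 0 < Cnorm L) by (apply Dpos; unfold dl in *; lra).
  assert (N1 := box_near _ _ _ a1 b1). assert (N2 := box_near _ _ _ a2 b2).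
  assert (N3 := box_near _ _ _ a1 b2).
  pose proof (G_est m v th _ c Hth Hv B1 N1 Hc) as G1.
  pose proof (G_est m v th _ c Hth Hv B2 N2 Hc) as G2.
  fold L in G1, G2.
  set (E1 := D m (x1, y2) (x1, y1)).
  assert (HE1 : Cnorm (Csub E1 L) <= Cnorm L / 4) by (apply local_est; auto).
  set (E2 := D m (x2, y2) (x1, y2)).
  assert (HE2 : Cnorm (Csub E2 L) <= Cnorm L / 4) by (apply local_est; auto).
  assert (Hs : snd (wv m v (x1, y2)) - snd (wv m v (x1, y1)) = (y2 - y1) * fst E1).
  { transitivity (snd (Csub (F m (x1, y2)) (F m (x1, y1)))).
    - unfold wv; simpl; ring.
    - rewrite F_diff. fold E1. unfold Csub, Cmul; simpl; ring. }
  assert (HfE : Rabs (fst E1) >= Cnorm L / 4).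
  { pose proof (cn_fst (Csub E1 L)). simpl in H.
    pose proof (Rabs_triang_inv (fst L) (fst L - fst E1)).
    replace (fst L - (fst L - fst E1)) with (fst E1) in H0 by ring.
    rewrite <- Rabs_Ropp in H. replace (- (fst E1 - fst L)) with (fst L - fst E1) in H by ring.
    lra. }
  assert (Hd : Cnorm (Csub (wv m v (x2, y2)) (wv m v (x1, y2))) <= 5/4 * h * Cnorm L).
  { replace (Csub (wv m v (x2, y2)) (wv m v (x1, y2))) with (Csub (F m (x2, y2)) (F m (x1, y2)))
      by (unfold wv; destruct (F m (x2,y2)), (F m (x1,y2)), (F m v); unfold Csub; simpl; f_equal; ring).
    rewrite F_diff. fold E2. rewrite cn_mul.
    unfold Csub at 1; simpl fst; simpl snd. replace (y2 - y2) with 0 by ring. rewrite cn_pair0.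
    assert (Cnorm E2 <= 5/4 * Cnorm L).
    { replace E2 with (Cadd L (Csub E2 L)) by (destruct E2, L; unfold Cadd, Csub; simpl; f_equal; ring).
      pose proof (cn_add L (Csub E2 L)). lra. }
    rewrite Rabs_minus_sym in Hh.
    pose proof (Rabs_pos (x2 - x1)). pose proof (cn_ge0 E2). nra. }
  apply (core_arith (y2 - y1) (Cnorm L) th h
      (Rabs (snd (wv m v (x1, y2)) - snd (wv m v (x1, y1))))
      (Rabs (snd (wv m v (x1, y1)))) (Rabs (snd (wv m v (x2, y2))))
      (Cnorm (Csub (wv m v (x2, y2)) (wv m v (x1, y2))))); auto.
  - rewrite Hs, Rabs_mult. pose proof (Rabs_pos (y2 - y1)). nra.
  - pose proof (cn_snd (Csub (wv m v (x2, y2)) (wv m v (x1, y2)))). simpl in H.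
    set (a := snd (wv m v (x1, y2))) in *. set (b := snd (wv m v (x1, y1))) in *.
    set (c2 := snd (wv m v (x2, y2))) in *.
    replace (a - b) with ((a - c2) + c2 - b) by ring.
    eapply Rle_trans; [apply Rabs_triang|].
    pose proof (Rabs_triang (a - c2) c2).
    assert (Rabs (a - c2) <= Cnorm (Csub (wv m v (x2, y2)) (wv m v (x1, y2)))).
    { rewrite Rabs_minus_sym. exact H. }
    rewrite Rabs_Ropp. lra.
Qed.

Lemma strip_H m v th c x1 y1 x2 y2 h : 0 <= th -> Cnorm v < 1/3 ->
  Cnorm c <= 1/3 + dl ->
  Rabs (snd (D m c c)) >= Cnorm (D m c c) / 2 ->
  bad m v th (x1, y1) -> bad m v th (x2, y2) ->
  Rabs (x1 - fst c) <= dl/2 -> Rabs (y1 - snd c) <= dl/2 ->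
  Rabs (x2 - fst c) <= dl/2 -> Rabs (y2 - snd c) <= dl/2 ->
  Rabs (y1 - y2) <= h ->
  Rabs (x2 - x1) <= 8 * th * KK + 5 * h.
Proof.
  intros Hth Hv Hc Hre B1 B2 a1 b1 a2 b2 Hh.
  set (L := D m c c) in *.
  assert (HL : 0 < Cnorm L) by (apply Dpos; unfold dl in *; lra).
  assert (N1 := box_near _ _ _ a1 b1). assert (N2 := box_near _ _ _ a2 b2).
  assert (N3 := box_near _ _ _ a2 b1).
  pose proof (G_est m v th _ c Hth Hv B1 N1 Hc) as G1.
  pose proof (G_est m v th _ c Hth Hv B2 N2 Hc) as G2.
  fold L in G1, G2.
  set (E1 := D m (x2, y1) (x1, y1)).
  assert (HE1 : Cnorm (Csub E1 L) <= Cnorm L / 4) by (apply local_est; auto).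
  set (E2 := D m (x2, y2) (x2, y1)).
  assert (HE2 : Cnorm (Csub E2 L) <= Cnorm L / 4) by (apply local_est; auto).
  assert (Hs : snd (wv m v (x2, y1)) - snd (wv m v (x1, y1)) = (x2 - x1) * snd E1).
  { transitivity (snd (Csub (F m (x2, y1)) (F m (x1, y1)))).
    - unfold wv; simpl; ring.
    - rewrite F_diff. fold E1. unfold Csub, Cmul; simpl; ring. }
  assert (HfE : Rabs (snd E1) >= Cnorm L / 4).
  { pose proof (cn_snd (Csub E1 L)). simpl in H.
    pose proof (Rabs_triang_inv (snd L) (snd L - snd E1)).
    replace (snd L - (snd L - snd E1)) with (snd E1) in H0 by ring.
    rewrite <- Rabs_Ropp in H. replace (- (snd E1 - snd L)) with (snd L - snd E1) in H by ring.
    lra. }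
  assert (Hd : Cnorm (Csub (wv m v (x2, y2)) (wv m v (x2, y1))) <= 5/4 * h * Cnorm L).
  { replace (Csub (wv m v (x2, y2)) (wv m v (x2, y1))) with (Csub (F m (x2, y2)) (F m (x2, y1)))
      by (unfold wv; destruct (F m (x2,y2)), (F m (x1,y2)), (F m v); unfold Csub; simpl; f_equal; ring).
    rewrite F_diff. fold E2. rewrite cn_mul.
    unfold Csub at 1; simpl fst; simpl snd. replace (x2 - x2) with 0 by ring. rewrite cn_0pair.
    assert (Cnorm E2 <= 5/4 * Cnorm L).
    { replace E2 with (Cadd L (Csub E2 L)) by (destruct E2, L; unfold Cadd, Csub; simpl; f_equal; ring).
      pose proof (cn_add L (Csub E2 L)). lra. }
    rewrite Rabs_minus_sym in Hh.
    pose proof (Rabs_pos (y2 - y1)). pose proof (cn_ge0 E2). nra. }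
  apply (core_arith (x2 - x1) (Cnorm L) th h
      (Rabs (snd (wv m v (x2, y1)) - snd (wv m v (x1, y1))))
      (Rabs (snd (wv m v (x1, y1)))) (Rabs (snd (wv m v (x2, y2))))
      (Cnorm (Csub (wv m v (x2, y2)) (wv m v (x2, y1))))); auto.
  - rewrite Hs, Rabs_mult. pose proof (Rabs_pos (x2 - x1)). nra.
  - pose proof (cn_snd (Csub (wv m v (x2, y2)) (wv m v (x2, y1)))). simpl in H.
    set (a := snd (wv m v (x2, y1))) in *. set (b := snd (wv m v (x1, y1))) in *.
    set (c2 := snd (wv m v (x2, y2))) in *.
    replace (a - b) with ((a - c2) + c2 - b) by ring.
    eapply Rle_trans; [apply Rabs_triang|].
    pose proof (Rabs_triang (a - c2) c2).
    assert (Rabs (a - c2) <= Cnorm (Csub (wv m v (x2, y2)) (wv m v (x2, y1)))).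
    { rewrite Rabs_minus_sym. exact H. }
    rewrite Rabs_Ropp. lra.
Qed.


Lemma grid (M : nat) (t w : R) : 0 < w -> 0 <= t < INR M * w ->
  exists i, (i < M)%nat /\ INR i * w <= t < (INR i + 1) * w.
Proof.
  intros Hw. induction M; intros [H0 H1].
  - simpl in H1. lra.
  - destruct (Rlt_dec t (INR M * w)) as [L|L].
    + destruct IHM as [i [Hi Hi']]; [lra|]. exists i; split; [lia|auto].
    + exists M; split; [lia|]. rewrite S_INR in H1. lra.
Qed.

Lemma fin_sum (f : nat -> R) T c : (forall n, (n < T)%nat -> f n = c) ->
  (forall n, (T <= n)%nat -> f n = 0) -> infinite_sum f (INR T * c).
Proof.
  intros H1 H2.
  assert (Hs : forall n, sum_f_R0 f n = INR (Nat.min (S n) T) * c).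
  { induction n; simpl sum_f_R0.
    - destruct T; simpl. rewrite H2 by lia. ring. rewrite H1 by lia. simpl. ring.
    - rewrite IHn. destruct (Nat.lt_ge_cases (S n) T).
      + rewrite H1 by auto. replace (Nat.min (S (S n)) T) with (S (Nat.min (S n) T)) by lia.
        rewrite S_INR. ring.
      + rewrite H2 by auto. replace (Nat.min (S (S n)) T) with (Nat.min (S n) T) by lia. ring. }
  intros eps Heps. exists T. intros n Hn. rewrite Hs.
  replace (Nat.min (S n) T) with T by lia. unfold Rdist. rewrite Rminus_diag, Rabs_R0. lra.
Qed.

Definition MM : nat := 1000.
Definition ax (i : nat) : R := -1/2 + INR i * dl.
Definition cen (i j : nat) : Cx := (ax i + dl/2, ax j + dl/2).
Definition insq i j (p : Cx) : Prop :=
  ax i <= fst p < ax i + dl /\ ax j <= snd p < ax j + dl.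

Definition hN (N : nat) : R := dl / INR N.
Definition HH (th : R) (N : nat) : R := 8 * th * KK + 6 * hN N.
Definition lam (m : nat) i j := D m (cen i j) (cen i j).
Definition inV (m : nat) (v : Cx) (th : R) (N : nat) i j l p := bad m v th p /\ insq i j p /\
  ax i + INR l * hN N <= fst p < ax i + (INR l + 1) * hN N.
Definition inH (m : nat) (v : Cx) (th : R) (N : nat) i j l p := bad m v th p /\ insq i j p /\
  ax j + INR l * hN N <= snd p < ax j + (INR l + 1) * hN N.
Definition ancV m v th N i j l := epsilon (inhabits Czero) (inV m v th N i j l).
Definition ancH m v th N i j l := epsilon (inhabits Czero) (inH m v th N i j l).
Definition rect m v th N (i j l : nat) : R * R * R * R :=
  if Rle_dec (Cnorm (lam m i j) / 2) (Rabs (fst (lam m i j)))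
  then (ax i + INR l * hN N, ax i + (INR l + 1) * hN N, snd (ancV m v th N i j l) - HH th N, snd (ancV m v th N i j l) + HH th N)
  else (fst (ancH m v th N i j l) - HH th N, fst (ancH m v th N i j l) + HH th N, ax j + INR l * hN N, ax j + (INR l + 1) * hN N).
Definition TT (N : nat) : nat := (N * (MM * MM))%nat.
Definition rseq m v th N (t : nat) : R * R * R * R :=
  if lt_dec t (TT N) then rect m v th N ((t / N) / MM) ((t / N) mod MM) (t mod N) else (0, 0, 0, 0).


Lemma INR_MM : INR MM = 1000.
Proof. unfold MM. rewrite INR_IZR_INZ. simpl. reflexivity. Qed.

Lemma abs_le_inv' a b : Rabs a <= b -> -b <= a <= b.
Proof. unfold Rabs; destruct (Rcase_abs a); intros; lra. Qed.

Lemma decode N i j l : (0 < N)%nat -> (i < MM)%nat -> (j < MM)%nat -> (l < N)%nat ->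
  let t := (l + N * (j + MM * i))%nat in
  (t < TT N /\ (t / N) / MM = i /\ (t / N) mod MM = j /\ t mod N = l)%nat.
Proof.
  intros HN Hi Hj Hl t.
  assert (E1 : (t / N = j + MM * i)%nat) by (symmetry; apply Nat.div_unique with l; unfold t; lia).
  assert (E2 : (t mod N = l)%nat) by (symmetry; apply Nat.mod_unique with (j + MM * i)%nat; unfold t; lia).
  rewrite E1, E2. split; [|split; [|split]]; auto.
  - unfold t, TT. assert (Hx : (j + MM * i + 1 <= MM * MM)%nat) by nia.
    pose proof (Nat.mul_le_mono_l _ _ N Hx). lia.
  - symmetry; apply Nat.div_unique with j; lia.
  - symmetry; apply Nat.mod_unique with i; lia.
Qed.

Lemma cover m v th N eps : 0 < th -> (0 < N)%nat -> Cnorm v < 1/3 ->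
  2000 * HH th N < eps -> m2_lt (bad m v th) eps.
Proof.
  intros Hth HN Hv Heps.
  assert (HNr : 0 < INR N) by (apply lt_0_INR; lia).
  assert (HhN : 0 < hN N) by (unfold hN, dl; apply Rdiv_lt_0_compat; lra).
  assert (HKK : 0 < KK) by (unfold KK; apply exp_pos).
  assert (HHp : 0 < HH th N) by (unfold HH; nra).
  exists (fun t => fst (fst (fst (rseq m v th N t)))), (fun t => snd (fst (fst (rseq m v th N t)))),
    (fun t => snd (fst (rseq m v th N t))), (fun t => snd (rseq m v th N t)),
    (INR (TT N) * (hN N * (2 * HH th N))).
  split; [|split; [|split]].
  - intros n. unfold rseq. destruct (lt_dec n (TT N)).
    + unfold rect. destruct (Rle_dec _ _); simpl; split; nra.
    + simpl; lra.
  - intros [x y] Bz.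
    assert (Hx : Rabs x < 1/3) by (pose proof (cn_fst (x, y)); simpl in H; destruct Bz; lra).
    assert (Hy : Rabs y < 1/3) by (pose proof (cn_snd (x, y)); simpl in H; destruct Bz; lra).
    apply Rabs_def2 in Hx. apply Rabs_def2 in Hy.
    destruct (grid MM (x + 1/2) dl) as [i [Hi Hi']]; [unfold dl; lra| rewrite INR_MM; unfold dl; lra|].
    destruct (grid MM (y + 1/2) dl) as [j [Hj Hj']]; [unfold dl; lra| rewrite INR_MM; unfold dl; lra|].
    assert (Hsq : insq i j (x, y)) by (unfold insq, ax; simpl; lra).
    assert (Hnc : Cnorm (Csub (x, y) (cen i j)) <= dl).
    { apply box_near; unfold cen, ax; simpl; apply Rabs_le; lra. }
    assert (Hc : Cnorm (cen i j) <= 1/3 + dl).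
    { replace (cen i j) with (Csub (x,y) (Csub (x,y) (cen i j)))
        by (destruct (cen i j); unfold Csub; simpl; f_equal; ring).
      pose proof (cn_sub (x,y) (Csub (x, y) (cen i j))). destruct Bz. lra. }
    destruct (Rle_dec (Cnorm (lam m i j) / 2) (Rabs (fst (lam m i j)))) as [Hc1|Hc1].
    + destruct (grid N (x - ax i) (hN N)) as [l [Hl Hl']]; [auto| unfold hN, ax in *; split; [lra|];
        field_simplify; unfold dl in *; lra |].
      destruct (decode N i j l HN Hi Hj Hl) as [Ht [D1 [D2 D3]]].
      exists (l + N * (j + MM * i))%nat. unfold rseq.
      destruct (lt_dec _ _) as [_|C]; [|contradiction].
      rewrite D1, D2, D3. unfold rect.
      destruct (Rle_dec _ _) as [_|C]; [|contradiction]. simpl.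
      assert (IV : inV m v th N i j l (x, y)) by (split; [exact Bz|split; [exact Hsq|simpl; lra]]).
      pose proof (epsilon_spec (inhabits Czero) (inV m v th N i j l) (ex_intro (inV m v th N i j l) (x, y) IV)) as SP.
      fold (ancV m v th N i j l) in SP. destruct (ancV m v th N i j l) as [xa ya] eqn:EA.
      destruct SP as [Ba [[Sa1 Sa2] Sa3]]. simpl in Sa1, Sa2, Sa3.
      assert (St := strip_V m v th (cen i j) x y xa ya (hN N) (Rlt_le _ _ Hth) Hv Hc
        ltac:(fold (lam m i j); lra) Bz Ba).
      unfold cen in St; simpl in St.
      assert (Rabs (ya - y) <= 8 * th * KK + 5 * hN N).
      { apply St; apply Rabs_le; unfold ax in *; lra. }
      apply abs_le_inv' in H. unfold HH; simpl. split; [lra|]. split; lra.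
    + destruct (grid N (y - ax j) (hN N)) as [l [Hl Hl']]; [auto| unfold hN, ax in *; split; [lra|];
        field_simplify; unfold dl in *; lra |].
      destruct (decode N i j l HN Hi Hj Hl) as [Ht [D1 [D2 D3]]].
      exists (l + N * (j + MM * i))%nat. unfold rseq.
      destruct (lt_dec _ _) as [_|C]; [|contradiction].
      rewrite D1, D2, D3. unfold rect.
      destruct (Rle_dec _ _) as [C|_]; [contradiction|]. simpl.
      assert (IH : inH m v th N i j l (x, y)) by (split; [exact Bz|split; [exact Hsq|simpl; lra]]).
      pose proof (epsilon_spec (inhabits Czero) (inH m v th N i j l) (ex_intro (inH m v th N i j l) (x, y) IH)) as SP.
      fold (ancH m v th N i j l) in SP. destruct (ancH m v th N i j l) as [xa ya] eqn:EA.
      destruct SP as [Ba [[Sa1 Sa2] Sa3]]. simpl in Sa1, Sa2, Sa3.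
      assert (Hc2 : Rabs (snd (lam m i j)) >= Cnorm (lam m i j) / 2).
      { pose proof (cn_sq (lam m i j)). pose proof (cn_ge0 (lam m i j)).
        assert (Rabs (fst (lam m i j)) * Rabs (fst (lam m i j)) = fst (lam m i j) * fst (lam m i j))
          by (rewrite <- Rabs_mult; apply Rabs_pos_eq; nra).
        assert (Rabs (snd (lam m i j)) * Rabs (snd (lam m i j)) = snd (lam m i j) * snd (lam m i j))
          by (rewrite <- Rabs_mult; apply Rabs_pos_eq; nra).
        pose proof (Rabs_pos (fst (lam m i j))). pose proof (Rabs_pos (snd (lam m i j))).
        nra. }
      assert (St := strip_H m v th (cen i j) x y xa ya (hN N) (Rlt_le _ _ Hth) Hv Hc
        ltac:(fold (lam m i j); lra) Bz Ba).
      unfold cen in St; simpl in St.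
      assert (Rabs (xa - x) <= 8 * th * KK + 5 * hN N).
      { apply St; apply Rabs_le; unfold ax in *; lra. }
      apply abs_le_inv' in H. unfold HH; simpl. split; [split; lra|]. lra.
  - apply fin_sum.
    + intros n Hn. unfold rseq. destruct (lt_dec n (TT N)); [|lia].
      unfold rect. destruct (Rle_dec _ _); simpl; ring.
    + intros n Hn. unfold rseq. destruct (lt_dec n (TT N)); [lia|]. simpl; ring.
  - unfold TT. rewrite !mult_INR, INR_MM. unfold hN, dl in *.
    replace (INR N * (1000 * 1000) * (1 / 1000 / INR N * (2 * HH th N))) with (2000 * HH th N)
      by (field; lra). lra.
Qed.


Lemma sin_abs_le t : Rabs (sin t) <= Rabs t.
Proof.
  assert (P : forall t, 0 <= t -> Rabs (sin t) <= t).
  { intros s Hs. destruct (Req_dec s 0) as [E|E].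
    - subst. rewrite sin_0, Rabs_R0. lra.
    - pose proof (sin_lt_x s ltac:(lra)). pose proof (SIN_bound s).
      destruct (Rle_dec s PI).
      + pose proof (sin_ge_0 s Hs r). rewrite Rabs_pos_eq; lra.
      + pose proof PI2_1. unfold Rabs; destruct (Rcase_abs (sin s)); lra. }
  destruct (Rle_dec 0 t).
  - rewrite (Rabs_pos_eq t) by lra. auto.
  - replace t with (- (-t)) by ring. rewrite sin_neg, !Rabs_Ropp.
    rewrite (Rabs_left t) by lra. apply P; lra.
Qed.

Lemma Csub0 z : Csub z Czero = z.
Proof. destruct z; unfold Csub, Czero; simpl; f_equal; ring. Qed.

Lemma m2_mono (A B : Cx -> Prop) e : (forall z, B z -> A z) -> m2_lt A e -> m2_lt B e.
Proof.
  intros Hs (a & b & c & d & s & H1 & H2 & H3 & H4).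
  exists a, b, c, d, s. split; [exact H1|split; [|split; [exact H3|exact H4]]]. intros z Bz. apply H2, Hs, Bz.
Qed.

Theorem lemma2p2 (U2 : Cx -> Prop) (HU : attracting_petal_P2 U2)
  (V : Cx -> Prop) (HVo : Cis_open V) (HVd : forall z, V z -> Cdisc Czero (1/3) z)
  (eps : R) (Heps : 0 < eps) :
  exists m0 : nat, forall m : nat, (m0 <= m)%nat ->
    forall z0 : Cx, (exists v, V v /\ z0 = Nat.iter m P1 v) ->
      m2_lt (fun z => V z /\ ~ U2 (Csub (Nat.iter m P1 z) z0)) eps.
Proof.
  destruct HU as (_ & _ & _ & _ & _ & Hcusp).
  assert (HKK : 0 < KK) by (unfold KK; apply exp_pos).
  set (th := eps / (64000 * KK)).
  assert (Hth : 0 < th) by (unfold th; apply Rdiv_lt_0_compat; nra).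
  destruct (INR_unbounded (48 / eps)) as [N HN].
  assert (H48 : 0 < 48 / eps) by (apply Rdiv_lt_0_compat; lra).
  assert (HN0 : (0 < N)%nat).
  { destruct N; [simpl in HN; lra| lia]. }
  destruct (Hcusp th Hth) as [r [Hr Hcr]].
  destruct (pow_lt_1_zero (7/10) ltac:(rewrite Rabs_pos_eq; lra) r Hr) as [m0 Hm0].
  exists m0. intros m Hm z0 [v [Vv Ez0]].
  assert (Hv : Cnorm v < 1/3) by (pose proof (HVd v Vv); unfold Cdisc in H; rewrite Csub0 in H; exact H).
  apply m2_mono with (bad m v th).
  - intros z [Vz NU].
    assert (Hz : Cnorm z < 1/3) by (pose proof (HVd z Vz); unfold Cdisc in H; rewrite Csub0 in H; exact H).
    split; auto.
    change (Nat.iter m P1 z) with (F m z) in NU.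
    rewrite Ez0 in NU. change (Nat.iter m P1 v) with (F m v) in NU. fold (wv m v z) in NU.
    assert (Hw : Cnorm (wv m v z) < r).
    { unfold wv. pose proof (cn_sub (F m z) (F m v)).
      pose proof (F_norm m z ltac:(lra)). pose proof (F_norm m v ltac:(lra)).
      pose proof (Hm0 m Hm). rewrite Rabs_pos_eq in H2 by (apply pow_le; lra).
      pose proof (pow_le (7/10) m ltac:(lra)). nra. }
    destruct (Hcr (wv m v z)) as [E|[_ Harg]]; auto.
    + unfold Cdisc. rewrite Csub0. auto.
    + rewrite E. simpl. rewrite Rabs_R0. pose proof (cn_ge0 Czero). nra.
    + destruct Harg as [t [Ht1 [Ht2 [Hf Hs]]]]. rewrite Hs, Rabs_mult.
      rewrite (Rabs_pos_eq (Cnorm _)) by apply cn_ge0.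
      pose proof (sin_abs_le t). pose proof (cn_ge0 (wv m v z)). nra.
  - apply (cover m v th N eps Hth HN0 Hv).
    unfold HH, hN, dl, th.
    assert (12 / INR N < eps / 4).
    { assert (0 < INR N) by lra.
      apply Rmult_lt_reg_r with (INR N); auto.
      field_simplify; try lra.
      unfold Rdiv in HN. apply Rmult_lt_compat_r with (r := eps) in HN; auto.
      rewrite Rmult_assoc, Rinv_l in HN by lra. lra. }
    replace (2000 * (8 * (eps / (64000 * KK)) * KK + 6 * (1 / 1000 / INR N)))
      with (eps / 4 + 12 / INR N) by (field; split; lra).
    lra.
Qed.
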